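(* Let $K$ be a field, $R=K[x_0,\dots,x_n]$, $I\subseteq R$ an ideal, and $s\ge1$ an integer. If $I$ is primary to the ideal $(x_s,\dots,x_n)$ and $\widetilde I\cap\big(I:(x_s,\dots,x_n)\big)\subseteq I$, then $I$ is Ratliff-Rush closed.
   Context: Ratliff-Rush closure: for an ideal $I$ of a commutative Noetherian ring $R$ containing a nonzerodivisor, $\widetilde I=\bigcup_{k\ge1}(I^{k+1}:I^k)$, where $I^{k+1}:I^k=\{x\in R: xI^k\subseteq I^{k+1}\}$; $I$ is Ratliff-Rush closed if $\widetilde I=I$. (An ideal primary to $(x_s,\dots,x_n)$ contains a power of $x_n$, hence a nonzerodivisor.) *)

(* Defs.v *)
From HB Require Import structures.
From mathcomp Require Import all_boot all_order all_algebra.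
From mathcomp Require Export mpoly.
Set Implicit Arguments. Unset Strict Implicit. Unset Printing Implicit Defensive.
Import GRing.Theory.
Local Open Scope ring_scope.

Section Ideals.
Variable R : comNzRingType.

Definition is_ideal (I : R -> Prop) : Prop :=
  [/\ I 0, (forall x y, I x -> I y -> I (x + y)) & (forall r x, I x -> I (r * x))].

Definition ideal_mul (J I : R -> Prop) : R -> Prop :=
  fun x => exists s : seq (R * R),
    (forall p, p \in s -> J p.1 /\ I p.2) /\ x = \sum_(p <- s) p.1 * p.2.

Fixpoint ideal_pow (I : R -> Prop) (k : nat) : R -> Prop :=
  match k with
  | 0 => fun _ => True
  | k'.+1 => ideal_mul (ideal_pow I k') I
  end.

Definition colon (I J : R -> Prop) : R -> Prop :=
  fun x => forall y, J y -> I (x * y).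

Definition radical (I : R -> Prop) : R -> Prop :=
  fun x => exists m : nat, I (x ^+ m).

Definition is_primary (I : R -> Prop) : Prop :=
  [/\ is_ideal I, ~ I 1 &
      forall a b, I (a * b) -> I a \/ radical I b].

Definition primary_to (I P : R -> Prop) : Prop :=
  is_primary I /\ forall x, radical I x <-> P x.

Definition ratliff_rush (I : R -> Prop) : R -> Prop :=
  fun x => exists k : nat, (1 <= k)%N /\ colon (ideal_pow I k.+1) (ideal_pow I k) x.

Definition rr_closed (I : R -> Prop) : Prop :=
  forall x, ratliff_rush I x <-> I x.

End Ideals.

Definition var_ideal (K : comNzRingType) (n s : nat) : {mpoly K[n.+1]} -> Prop :=
  fun f => exists c : 'I_n.+1 -> {mpoly K[n.+1]},
    f = \sum_(i < n.+1 | (s <= i)%N) c i * 'X_i.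
Arguments var_ideal : clear implicits.

(* Main.v *)
Require Import Defs.
From HB Require Import structures.
From mathcomp Require Import all_boot all_order all_algebra.
From mathcomp Require Import mpoly.
Import GRing.Theory.
Local Open Scope ring_scope.

Lemma size_sum_count m (w : seq 'I_m) : size w = (\sum_(i < m) count_mem i w)%N.
Proof.
elim: w => [|x w IH]; first by rewrite big1.
rewrite /= big_split /= -IH (bigD1 x) //= eqxx big1 // => i /negbTE.
by rewrite eq_sym => ->.
Qed.

Lemma pigeon m (w : seq 'I_m.+1) E : (0 < E)%N -> (m.+1 * E <= size w)%N -> exists i, (E <= count_mem i w)%N.
Proof.
move=> E0 H; case: (pickP (fun i => E <= count_mem i w)%N) => [i Hi|Hc]; first by exists i.
have : (size w <= \sum_(i < m.+1) E.-1)%N.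
  rewrite size_sum_count; apply: leq_sum => i _.
  by move: (Hc i); case: E {H Hc E0} => //= E /negbT; rewrite -ltnNge ltnS.
rewrite sum_nat_const card_ord => H2.
have := leq_trans H H2; case: E {Hc H H2 E0} => [|E] //=.
- by exists ord0.
- by rewrite leq_pmul2l // ltnn.
Qed.

Section Gen.
Variable R : comNzRingType.
Variable I : R -> Prop.
Hypothesis HI : is_ideal I.

Lemma ideal_sum (T : Type) (r : seq T) (P : pred T) F :
  (forall i, P i -> I (F i)) -> I (\sum_(i <- r | P i) F i).
Proof.
case: HI => H0 HD HM HF; apply: big_ind => //.
Qed.

Lemma ideal_mulr x r : I x -> I (x * r).
Proof. by case: HI => _ _ HM Hx; rewrite mulrC; apply: HM. Qed.

Lemma rr_mul r f : ratliff_rush I f -> ratliff_rush I (r * f).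
Proof.
case=> k [k1 Hk]; exists k; split => // y Hy.
rewrite -mulrA; have [sq [Hsq ->]] := Hk y Hy.
exists (map (fun p => (p.1, r * p.2)) sq); split.
  move=> p /mapP [q Hq ->] /=; have [A B] := Hsq q Hq; split => //.
  by case: HI => _ _ HM; apply: HM.
rewrite big_map mulr_sumr; apply: eq_bigr => p _ /=.
by rewrite mulrCA.
Qed.

Lemma I_rr x : I x -> ratliff_rush I x.
Proof.
move=> Hx; exists 1%N; split => // y [sq [Hsq ->]].
exists (map (fun p => (p.1 * p.2, x)) sq); split.
  move=> p /mapP [q Hq ->] /=; split => //.
  exists [:: q]; split; first by move=> p0; rewrite inE => /eqP ->; split => //; case: (Hsq q Hq).
  by rewrite big_seq1.
rewrite big_map mulr_sumr; apply: eq_bigr => p _ /=.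
by rewrite mulrC.
Qed.

End Gen.

Lemma prod_const_count (R : comNzRingType) (T : eqType) (w : seq T) (F : T -> R) i :
  \prod_(j <- w) F j = F i ^+ count_mem i w * \prod_(j <- w | j != i) F j.
Proof.
elim: w => [|x w IH]; first by rewrite !big_nil expr0 mulr1.
rewrite !big_cons IH /=; case: (eqVneq x i) => [->|Hne] /=.
  by rewrite ?eqxx /= ?add1n exprS mulrA.
by rewrite add0n mulrCA.
Qed.

Theorem mainTheorem2 (K : fieldType) (n s : nat) (I : {mpoly K[n.+1]} -> Prop) :
  (1 <= s)%N ->
  is_ideal I ->
  primary_to I (var_ideal K n s) ->
  (forall x, ratliff_rush I x -> colon I (var_ideal K n s) x -> I x) ->
  rr_closed I.
Proof.
move=> _ HI [_ Hrad] Hhyp x; split; last exact: I_rr.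
have HM := HI; case: HM => _ _ HM.
have Xin : forall i : 'I_n.+1, (s <= i)%N -> var_ideal K n s 'X_i.
  move=> i si; exists (fun j => if j == i then 1 else 0).
  rewrite (bigD1 i) //= eqxx mul1r big1 ?addr0 // => j /andP [_ /negbTE ->].
  by rewrite mul0r.
have [E [E0 HE]] : exists E, (0 < E)%N /\ forall i : 'I_n.+1, (s <= i)%N ->
    forall k, (E <= k)%N -> I ('X_i ^+ k).
  suff : forall l : seq 'I_n.+1, exists E, (0 < E)%N /\ forall i, i \in l -> (s <= i)%N ->
    forall k, (E <= k)%N -> I ('X_i ^+ k).
    by case/(_ (enum 'I_n.+1)) => E [E0 HE]; exists E; split => // i; apply: HE; rewrite mem_enum.
  elim=> [|a l [E [E0 IH]]]; first by exists 1%N.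
  case: (leqP s a) => sa.
    have [m Hm] := (Hrad 'X_a).2 (Xin a sa).
    exists (maxn E m).+1; split => // i; rewrite inE => /orP [/eqP -> _ k Hk|Hil si k Hk].
      rewrite -(subnK (ltnW (leq_ltn_trans (leq_maxr E m) Hk))) exprD.
      by apply: HM.
    by apply: IH => //; apply: leq_trans Hk; apply: ltnW; rewrite ltnS leq_maxl.
  exists E; split => // i; rewrite inE => /orP [/eqP -> |Hil si k Hk]; first by rewrite leqNgt sa.
  exact: IH.
have key : forall N f, ratliff_rush I f ->
    (forall w : seq 'I_n.+1, size w = N -> all (fun i : 'I_n.+1 => s <= i)%N w ->
       I (f * \prod_(j <- w) 'X_j)) -> I f.
  elim=> [|N IHN] f Hf Hw.
    by have := Hw [::] erefl erefl; rewrite big_nil mulr1.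
  apply: (IHN f Hf) => w Hsz Hall.
  apply: Hhyp; first by rewrite mulrC; apply: rr_mul.
  move=> y [c ->]; rewrite mulr_sumr; apply: ideal_sum => // i si.
  rewrite mulrCA; apply: HM; rewrite -mulrA.
  have := Hw (i :: w); rewrite big_cons /= Hsz si Hall => /(_ erefl erefl).
  by rewrite [_ * 'X_i]mulrC.
move=> Hx; apply: (key (n.+1 * E)%N x Hx) => w Hsz Hall.
have [i Hi] := @pigeon _ w E E0 (eq_leq (esym Hsz)).
have iw : i \in w by rewrite -has_pred1 has_count; apply: leq_trans Hi.
have si := allP Hall i iw.
rewrite (@prod_const_count _ _ w (fun j => 'X_j) i) mulrCA mulrC; apply: HM.
exact: (HE i si).
Qed.
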